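(* The function $F:\Delta^K\to\mathbb{R}^{K+1}$ described in the context is $\lambda(5+\sqrt K)$-Lipschitz continuous with respect to the Euclidean norm, i.e., \[ \|F(x)-F(y)\|\le\lambda(5+\sqrt K)\|x-y\|\qquad\text{for all }x,y\in\Delta^K. \]
   Context: Parameters: integer $K\ge 1$, $\lambda>0$, $\mu\in(0,1]$, $p_1,\dots,p_K\in[0,1]$. $\Delta^K=\{x\in\mathbb{R}^{K+1}:\sum_{k=0}^K x_k=1,\ x_k\ge0\}$ (coordinates indexed from $0$). $F$ is given by $F_0(x)=-\lambda x_0\sum_{k=1}^K(\frac{\mu}{K}+(1-\mu)x_k)p_k$ and, for $k=1,\dots,K$, $F_k(x)=\lambda x_0(\frac{\mu}{K}+(1-\mu)x_k)p_k+\lambda x_k\sum_{k'=1}^K(p_k-p_{k'})x_{k'}$. *)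

(* Defs.v *)
From mathcomp Require Import all_boot all_order all_algebra.
From mathcomp Require Import reals.
Set Implicit Arguments. Unset Strict Implicit. Unset Printing Implicit Defensive.
Import Order.TTheory GRing.Theory Num.Theory.
Local Open Scope ring_scope.

Definition simplex (R : realType) (K : nat) (x : 'I_K.+1 -> R) : Prop :=
  (forall k, 0 <= x k) /\ \sum_(k < K.+1) x k = 1.

Definition enorm (R : realType) (K : nat) (x : 'I_K.+1 -> R) : R :=
  Num.sqrt (\sum_(k < K.+1) x k ^+ 2).

(* The vector field F; p : 'I_K.+1 -> R with only p 1 .. p K used
   (p at index 0 is irrelevant). *)
Definition Fvec (R : realType) (K : nat) (lam mu : R) (p : 'I_K.+1 -> R)
    (x : 'I_K.+1 -> R) (k : 'I_K.+1) : R :=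
  if val k == 0%N then
    - lam * x ord0 * \sum_(j < K.+1 | val j != 0%N)
                        (mu / K%:R + (1 - mu) * x j) * p j
  else
    lam * x ord0 * (mu / K%:R + (1 - mu) * x k) * p k
    + lam * x k * \sum_(j < K.+1 | val j != 0%N) (p k - p j) * x j.

(* Main.v *)
Require Import Defs.
From mathcomp Require Import all_boot all_order all_algebra.
From mathcomp Require Import reals.
From mathcomp Require Import ring lra.
Import Order.TTheory GRing.Theory Num.Theory.
Local Open Scope ring_scope.

Lemma sumsq_ge0 {R : realType} {K : nat} (u : 'I_K.+1 -> R) :
  0 <= \sum_(k < K.+1) u k ^+ 2.
Proof. by apply: sumr_ge0 => k _; apply: sqr_ge0. Qed.

Lemma enorm_ge0 {R : realType} {K : nat} (u : 'I_K.+1 -> R) : 0 <= enorm u.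
Proof. exact: sqrtr_ge0. Qed.

Lemma enorm_pt {R : realType} {K : nat} (c : R) (u v : 'I_K.+1 -> R) :
  0 <= c -> (forall k, `|u k| <= c * `|v k|) -> enorm u <= c * enorm v.
Proof.
move=> c0 H; rewrite /enorm.
rewrite -(ger0_norm c0) -sqrtr_sqr -sqrtrM ?sqr_ge0 // ler_sqrt; last first.
  by apply: mulr_ge0; [apply: sqr_ge0| apply: sumsq_ge0].
rewrite mulr_sumr; apply: ler_sum => k _.
have := H k; have := real_normK (num_real (u k)); have := real_normK (num_real (v k)).
have := normr_ge0 (u k); have := normr_ge0 (v k).
move=> h1 h2 h3 h4 h5; rewrite -h3 -h4; nra.
Qed.

Lemma CS {R : realType} {K : nat} (a b : 'I_K.+1 -> R) :
  (\sum_k a k * b k) ^+ 2 <= (\sum_k a k ^+ 2) * (\sum_k b k ^+ 2).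
Proof.
have A0 := sumsq_ge0 a; have B0 := sumsq_ge0 b.
case: (eqVneq (\sum_k a k ^+ 2) 0) => [A00|An0].
  have az : forall k, a k = 0.
    move=> k; apply/eqP; rewrite -sqrf_eq0; apply/eqP.
    by apply: (psumr_eq0P _ A00) => // i _; apply: sqr_ge0.
  rewrite A00 mul0r big1 ?expr0n //= => k _; by rewrite az mul0r.
have Ap : 0 < \sum_k a k ^+ 2 by rewrite lt_def An0 A0.
have E : \sum_k ((\sum_k a k * b k) * a k - (\sum_k a k ^+ 2) * b k) ^+ 2
  = (\sum_k a k ^+ 2) * ((\sum_k a k ^+ 2) * (\sum_k b k ^+ 2) - (\sum_k a k * b k) ^+ 2).
  transitivity (\sum_k ((\sum_k a k * b k)^+2 * a k ^+ 2
     + (- (2 * (\sum_k a k * b k) * (\sum_k a k ^+ 2))) * (a k * b k)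
     + (\sum_k a k ^+ 2) ^+ 2 * b k ^+ 2)).
    by apply: eq_bigr => k _; ring.
  rewrite !big_split /= -!mulr_sumr; ring.
have : 0 <= \sum_k ((\sum_k a k * b k) * a k - (\sum_k a k ^+ 2) * b k) ^+ 2.
  by apply: sumr_ge0 => k _; apply: sqr_ge0.
rewrite E; move: Ap; set A := \sum_k a k ^+ 2; set B := \sum_k b k ^+ 2;
  set C := \sum_k a k * b k => Ap h; nra.
Qed.

Lemma CSn {R : realType} {K : nat} (a b : 'I_K.+1 -> R) :
  `|\sum_k a k * b k| <= enorm a * enorm b.
Proof.
rewrite /enorm -sqrtrM ?sumsq_ge0 // -sqrtr_sqr ler_sqrt; first exact: CS.
by apply: mulr_ge0; apply: sumsq_ge0.
Qed.

Lemma enorm_add {R : realType} {K : nat} (u v : 'I_K.+1 -> R) :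
  enorm (fun k => u k + v k) <= enorm u + enorm v.
Proof.
have h0 : 0 <= enorm u + enorm v by apply: addr_ge0; apply: enorm_ge0.
rewrite -(ger0_norm h0) -sqrtr_sqr /enorm ler_sqrt ?sqr_ge0 //.
have E : \sum_k (u k + v k) ^+ 2 =
   \sum_k u k ^+ 2 + 2 * \sum_k u k * v k + \sum_k v k ^+ 2.
  transitivity (\sum_k (u k ^+ 2 + 2 * (u k * v k) + v k ^+ 2)).
    by apply: eq_bigr => k _; ring.
  by rewrite !big_split /= -mulr_sumr.
rewrite E.
have := CSn u v; rewrite /enorm.
have := sqr_sqrtr (sumsq_ge0 u); have := sqr_sqrtr (sumsq_ge0 v).
have := ler_norm (\sum_k u k * v k).
set A := \sum_k u k ^+ 2; set B := \sum_k v k ^+ 2;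
  set C := \sum_k u k * v k => h1 h2 h3 h4.
nra.
Qed.

Lemma split0 {R : realType} {K : nat} (f : 'I_K.+1 -> R) :
  \sum_(k < K.+1) f k = f ord0 + \sum_(j < K.+1 | val j != 0%N) f j.
Proof.
rewrite (bigD1 ord0) //=.
Qed.

Lemma sum_nz_const {R : realType} {K : nat} (c : R) :
  \sum_(j < K.+1 | val j != 0%N) c = K%:R * c.
Proof.
rewrite big_mkcond big_ord_recl /= add0r.
rewrite (eq_bigr (fun _ => c)) ?sumr_const ?card_ord ?mulr_natl //.
Qed.

Lemma coord_le {R : realType} {K : nat} (u : 'I_K.+1 -> R) i : `|u i| <= enorm u.
Proof.
rewrite /enorm -sqrtr_sqr ler_sqrt ?sumsq_ge0 // (bigD1 i) //= lerDl.
by apply: sumr_ge0 => k _; apply: sqr_ge0.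
Qed.

Lemma elem_le {R : realType} {K : nat} (v : 'I_K.+1 -> R) :
  (forall k, 0 <= v k) -> forall i, v i <= \sum_k v k.
Proof.
move=> h i; rewrite (bigD1 i) //= lerDl.
by apply: sumr_ge0 => k _.
Qed.

Lemma unit_le {R : realType} {K : nat} (v : 'I_K.+1 -> R) :
  (forall k, 0 <= v k) -> \sum_k v k <= 1 -> enorm v <= 1.
Proof.
move=> h s1; rewrite /enorm -sqrtr1 ler_sqrt ?ler01 //.
apply: (le_trans _ (s1)); apply: ler_sum => k _.
have := le_trans (elem_le v h k) s1; have := h k; move=> a b; nra.
Qed.

Lemma Fvec_eq {R : realType} {K : nat} (lam mu : R) (p x : 'I_K.+1 -> R) k :
  Fvec lam mu p x k =
  if val k == 0%N then
    - lam * x ord0 * (mu / K%:R * \sum_(j < K.+1 | val j != 0%N) p j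
                      + (1 - mu) * \sum_(j < K.+1 | val j != 0%N) (p j * x j))
  else lam * x ord0 * (mu / K%:R + (1 - mu) * x k) * p k
    + lam * x k * (p k * \sum_(j < K.+1 | val j != 0%N) x j
                   - \sum_(j < K.+1 | val j != 0%N) (p j * x j)).
Proof.
rewrite /Fvec; case: ifP => _.
  congr (_ * _).
  transitivity (\sum_(j < K.+1 | val j != 0%N) (mu / K%:R * p j + (1 - mu) * (p j * x j))).
    by apply: eq_bigr => j _; ring.
  by rewrite big_split /= -!mulr_sumr.
congr (_ + _); congr (_ * _).
transitivity (\sum_(j < K.+1 | val j != 0%N) (p k * x j - p j * x j)).
  by apply: eq_bigr => j _; ring.
by rewrite sumrB -mulr_sumr.
Qed.

Theorem lemma6 (R : realType) (K : nat) (lam mu : R) (p : 'I_K.+1 -> R) :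
  (1 <= K)%N -> 0 < lam -> 0 < mu -> mu <= 1 ->
  (forall k : 'I_K.+1, (0 < val k)%N -> 0 <= p k <= 1) ->
  forall x y : 'I_K.+1 -> R, simplex x -> simplex y ->
    enorm (fun k => Fvec lam mu p x k - Fvec lam mu p y k)
    <= lam * (5 + Num.sqrt K%:R) * enorm (fun k => x k - y k).
Proof.
move=> K1 lam0 mu0 mu1 hp x y [xp xs] [yp ys].
have Kp : 0 < K%:R :> R by rewrite ltr0n.
have hpj : forall j : 'I_K.+1, val j != 0%N -> 0 <= p j <= 1.
  by move=> j hj; apply: hp; rewrite lt0n.
have Sx : \sum_(j < K.+1 | val j != 0%N) x j = 1 - x ord0.
  by move: xs; rewrite split0 => <-; ring.
have Sy : \sum_(j < K.+1 | val j != 0%N) y j = 1 - y ord0.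
  by move: ys; rewrite split0 => <-; ring.
have xle : forall k, 0 <= x k <= 1.
  by move=> k; apply/andP; split; [exact: xp | rewrite -xs; exact: elem_le].
have yle : forall k, 0 <= y k <= 1.
  by move=> k; apply/andP; split; [exact: yp | rewrite -ys; exact: elem_le].
set m := mu / K%:R.
have mK : m * K%:R = mu by rewrite /m mulfVK // gt_eqF.
have m0 : 0 <= m by rewrite /m divr_ge0 // ltW.
set Sp := \sum_(j < K.+1 | val j != 0%N) p j.
set Px := \sum_(j < K.+1 | val j != 0%N) (p j * x j).
set Py := \sum_(j < K.+1 | val j != 0%N) (p j * y j).
have Px0 : 0 <= Px.
  by apply: sumr_ge0 => j hj; have /andP[? ?] := hpj j hj; have /andP[? ?] := xle j; nra.
have Px1 : Px <= 1.
  have : Px <= 1 - x ord0.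
    rewrite -Sx; apply: ler_sum => j hj.
    by have /andP[? ?] := hpj j hj; have /andP[? ?] := xle j; nra.
  by have /andP[? ?] := xle ord0; lra.
have Sp0 : 0 <= Sp by apply: sumr_ge0 => j hj; have /andP[? ?] := hpj j hj.
have hmSp : m * Sp <= mu.
  rewrite -mK ler_wpM2l //.
  rewrite -[X in _ <= X]mulr1 -sum_nz_const; apply: ler_sum => j hj.
  by have /andP[? ?] := hpj j hj.
set N := enorm (fun k => x k - y k).
have N0 : 0 <= N by apply: enorm_ge0.
have hd0 : `|x ord0 - y ord0| <= N by have := coord_le (fun k => x k - y k) ord0.
have ny : enorm y <= 1 by apply: unit_le => //; rewrite ys.
have hQ : `|Px - Py| <= Num.sqrt K%:R * N.
  have -> : Px - Py = \sum_k (if val k == 0%N then 0 else p k) * (x k - y k).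
    rewrite split0 /= mul0r add0r /Px /Py -sumrB; apply: eq_bigr => j hj.
    by rewrite (negbTE hj); ring.
  apply: le_trans (CSn _ _) _; apply: ler_wpM2r => //.
  rewrite /enorm ler_sqrt ?ler0n // split0 /= expr0n /= add0r.
  rewrite -[X in _ <= X]mulr1 -sum_nz_const; apply: ler_sum => j hj.
  by rewrite (negbTE hj); have /andP[? ?] := hpj j hj; nra.
pose Q := Px - Py. pose d0 := x ord0 - y ord0.
pose W1 := fun k : 'I_K.+1 => if val k == 0%N then - ((1 - mu) * y ord0 * Q) else - (y k * Q).
pose W2 := fun k : 'I_K.+1 => if val k == 0%N then - (d0 * (m * Sp + (1 - mu) * Px)) else 0.
pose W34 := fun k : 'I_K.+1 => if val k == 0%N then 0 else p k * d0 * (m + (1 - mu) * x k).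
pose W5a := fun k : 'I_K.+1 => if val k == 0%N then 0 else (1 - mu) * p k * y ord0 * (x k - y k).
pose W5b := fun k : 'I_K.+1 => if val k == 0%N then 0 else (x k - y k) * (p k * (1 - x ord0) - Px).
pose W6 := fun k : 'I_K.+1 => if val k == 0%N then 0 else - (y k * p k * d0).
have -> : enorm (fun k => Fvec lam mu p x k - Fvec lam mu p y k) =
   enorm (fun k => lam * (W1 k + W2 k + W34 k + W5a k + W5b k + W6 k)).
  rewrite /enorm; congr Num.sqrt; apply: eq_bigr => k _; congr (_ ^+ 2).
  rewrite !Fvec_eq -/Sp -/Px -/Py -/m Sx Sy /W1 /W2 /W34 /W5a /W5b /W6 /Q /d0.
  by case: ifP => _; ring.
apply: le_trans (@enorm_pt _ _ (lam) _ (fun k => W1 k + W2 k + W34 k + W5a k + W5b k + W6 k) _ _) _.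
- exact: ltW.
- by move=> k; rewrite normrM (ger0_norm (ltW lam0)).
rewrite -mulrA; apply: ler_wpM2l; first exact: ltW.
have e1 : enorm W1 <= Num.sqrt K%:R * N.
  apply: le_trans (@enorm_pt _ _ (`|Q|) _ (y) _ _) _ => //.
    move=> k; rewrite /W1 /=; case: (eqVneq (val k) 0%N) => [hk|hk].
      have ek : k = ord0 by apply: val_inj.
      subst k; rewrite /= normrN !normrM (ger0_norm (_ : 0 <= 1 - mu)) ?subr_ge0 //.
      have := mulr_ge0 (normr_ge0 (y ord0)) (normr_ge0 Q); nra.
    by rewrite ?(negbTE hk) normrN normrM mulrC.
  apply: le_trans hQ; rewrite -[X in _ <= X]mulr1; apply: ler_wpM2l => //.
have e2 : enorm W2 <= 1 * N.
  apply: enorm_pt => // k; rewrite /W2 /=; case: (eqVneq (val k) 0%N) => [hk|hk].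
    have ek : k = ord0 by apply: val_inj.
    subst k; rewrite /= /d0 normrN normrM mul1r (ger0_norm (_ : 0 <= m * Sp + (1 - mu) * Px)); last first.
      by apply: addr_ge0; apply: mulr_ge0 => //; rewrite subr_ge0.
    have hc : m * Sp + (1 - mu) * Px <= 1 by nra.
    have := normr_ge0 (x ord0 - y ord0); nra.
  by rewrite ?(negbTE hk) normr0 mul1r normr_ge0.
have e34 : enorm W34 <= 1 * N.
  pose v := fun k : 'I_K.+1 => if val k == 0%N then 0 else m + (1 - mu) * x k.
  have v0 : forall k, 0 <= v k.
    move=> k; rewrite /v; case: ifP => // _.
    by have /andP[? ?] := xle k; nra.
  have nv : enorm v <= 1.
    apply: unit_le => //; rewrite split0 /v /= add0r.
    rewrite (eq_bigr (fun j => m + (1 - mu) * x j)); last first.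
      by move=> j hj; rewrite (negbTE hj).
    rewrite big_split /= sum_nz_const -mulr_sumr Sx mulrC mK.
    by have /andP[? ?] := xle ord0; nra.
  apply: le_trans (@enorm_pt _ _ (`|d0|) _ (v) _ _) _ => //.
    move=> k; rewrite /W34 /v /=; case: (eqVneq (val k) 0%N) => [hk|hk].
      by rewrite ?hk /= ?normr0 ?mulr0.
    rewrite ?(negbTE hk) !normrM; have /andP[? ?] := hpj k hk.
    rewrite (ger0_norm (_ : 0 <= p k)) //.
    have := mulr_ge0 (normr_ge0 d0) (normr_ge0 (m + (1 - mu) * x k)); nra.
  rewrite mul1r; apply: le_trans hd0; rewrite -[X in _ <= X]mulr1.
  by apply: ler_wpM2l.
have e5a : enorm W5a <= 1 * N.
  apply: enorm_pt => // k; rewrite /W5a /=; case: (eqVneq (val k) 0%N) => [hk|hk].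
    by rewrite ?hk /= normr0 mul1r normr_ge0.
  rewrite ?(negbTE hk) !normrM mul1r; have /andP[? ?] := hpj k hk.
  have /andP[? ?] := yle ord0.
  rewrite (ger0_norm (_ : 0 <= p k)) // (ger0_norm (_ : 0 <= y ord0)) //.
  rewrite (ger0_norm (_ : 0 <= 1 - mu)) ?subr_ge0 //.
  have h1 : 0 <= (1 - mu) * p k <= 1 by apply/andP; split; nra.
  have /andP[? ?] : 0 <= (1 - mu) * p k * y ord0 <= 1.
    by case/andP: h1 => ? ?; apply/andP; split; nra.
  have := normr_ge0 (x k - y k); nra.
have e5b : enorm W5b <= 1 * N.
  apply: enorm_pt => // k; rewrite /W5b /=; case: (eqVneq (val k) 0%N) => [hk|hk].
    by rewrite ?hk /= normr0 mul1r normr_ge0.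
  rewrite ?(negbTE hk) !normrM mul1r; have /andP[? ?] := hpj k hk.
  have /andP[? ?] := xle ord0.
  have : `|p k * (1 - x ord0) - Px| <= 1.
    by rewrite ler_norml; apply/andP; split; nra.
  have := normr_ge0 (x k - y k); have := normr_ge0 (p k * (1 - x ord0) - Px); nra.
have e6 : enorm W6 <= 1 * N.
  apply: le_trans (@enorm_pt _ _ (`|d0|) _ (y) _ _) _ => //.
    move=> k; rewrite /W6 /=; case: (eqVneq (val k) 0%N) => [hk|hk].
      by rewrite ?hk /= normr0; apply: mulr_ge0.
    rewrite ?(negbTE hk) normrN !normrM; have /andP[? ?] := hpj k hk.
    rewrite (ger0_norm (_ : 0 <= p k)) //.
    have := mulr_ge0 (normr_ge0 d0) (normr_ge0 (y k)); nra.
  rewrite mul1r; apply: le_trans hd0; rewrite -[X in _ <= X]mulr1.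
  by apply: ler_wpM2l.
have b2 : enorm (fun k => W1 k + W2 k) <= (Num.sqrt K%:R + 1) * N.
  apply: le_trans (enorm_add _ _) _; have := lerD e1 e2; lra.
have b3 : enorm (fun k => W1 k + W2 k + W34 k) <= (Num.sqrt K%:R + 2) * N.
  apply: le_trans (enorm_add _ _) _; have := lerD b2 e34; lra.
have b4 : enorm (fun k => W1 k + W2 k + W34 k + W5a k) <= (Num.sqrt K%:R + 3) * N.
  apply: le_trans (enorm_add _ _) _; have := lerD b3 e5a; lra.
have b5 : enorm (fun k => W1 k + W2 k + W34 k + W5a k + W5b k) <= (Num.sqrt K%:R + 4) * N.
  apply: le_trans (enorm_add _ _) _; have := lerD b4 e5b; lra.
apply: le_trans (enorm_add _ _) _; have := lerD b5 e6; lra.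
Qed.
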